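(* Let $\psi:\mathbb{R}^n\to\mathbb{R}$, $\psi(x)=u^Tx$ with $u\in\mathbb{Z}^n$. Let $F\subseteq\mathbb{R}^n$ be an $(n-1)$-dimensional lattice polytope, $v\in\mathbb{Z}^n\setminus\mathrm{aff}(F)$, $P=\mathrm{conv}(F\cup\{v\})$, and let $w$ be an outer normal vector of the facet $F$ of $P$. Assume that for every integer $i$ the maximizer $[P]_i$ is unique. Then \[ \mathrm{face}_w(\Sigma_\psi(P))=\begin{cases}\Sigma_\psi(F) & \text{if } \psi(v)\in\psi(F),\\[2pt] \Sigma_\psi(F)+\sum_{i=\max_{x\in F}\psi(x)}^{\psi(v)-1}[P]_i & \text{if } \psi(v)>\max_{x\in F}\psi(x),\\[2pt] \Sigma_\psi(F)+\sum_{i=\psi(v)}^{\min_{x\in F}\psi(x)-1}[P]_i & \text{if } \psi(v)<\min_{x\in F}\psi(x).\end{cases} \]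
   Context: For a polytope $Q$, $\mathrm{face}_w(Q)=\arg\max_{x\in Q}w^Tx$. For a lattice polytope $Q$ let $\psi_Q=\min_{x\in Q}\psi(x)$ and $\psi^Q=\max_{x\in Q}\psi(x)$ (integers). The fiber polytope is the Minkowski integral $\Sigma_\psi(Q)=\int_{\psi(Q)}(\psi^{-1}(x)\cap Q)\,dx$, which for lattice polytopes equals $\sum_{i=\psi_Q}^{\psi^Q-1}\big(\psi^{-1}(i+\tfrac12)\cap Q\big)$ (Minkowski sum). For $i\in\mathbb{Z}$, $[Q]_i:=\arg\max_{x\in Q\cap\psi^{-1}(i+\frac12)}w^Tx$. *)

(* Defs.v *)
From HB Require Import structures.
From mathcomp Require Import all_boot all_order all_algebra.
Set Implicit Arguments. Unset Strict Implicit. Unset Printing Implicit Defensive.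
Import Order.TTheory GRing.Theory Num.Theory.
Local Open Scope ring_scope.

Section Defs.
Variables (R : realFieldType) (n : nat).
Local Notation pt := 'rV[R]_n.

Definition pset := pt -> Prop.

Definition set_eq (A B : pset) : Prop := forall x, A x <-> B x.

Definition vecR (z : 'rV[int]_n) : pt := map_mx (fun k : int => k%:~R) z.

Definition dot (a b : pt) : R := \sum_(i < n) a 0 i * b 0 i.
Definition dotZ (a b : 'rV[int]_n) : int := \sum_(i < n) a 0 i * b 0 i.

Definition conv_seq (s : seq pt) : pset := fun x =>
  exists c : 'I_(size s) -> R,
    (forall i, 0 <= c i) /\ \sum_i c i = 1 /\ x = \sum_i c i *: s`_i.

Definition conv (A : pset) : pset := fun x =>
  exists s : seq pt, (forall y, y \in s -> A y) /\ conv_seq s x.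

Definition aff (A : pset) : pset := fun x =>
  exists s : seq pt, (forall y, y \in s -> A y) /\
  exists c : 'I_(size s) -> R, \sum_i c i = 1 /\ x = \sum_i c i *: s`_i.

Definition aff_indep (s : seq pt) : Prop :=
  forall c : 'I_(size s) -> R,
    \sum_i c i = 0 -> \sum_i c i *: s`_i = 0 -> forall i, c i = 0.

Definition affdim (A : pset) (d : nat) : Prop :=
  (exists s : seq pt, size s = d.+1 /\ (forall y, y \in s -> A y) /\ aff_indep s)
  /\ ~ (exists s : seq pt, size s = d.+2 /\ (forall y, y \in s -> A y) /\ aff_indep s).

Definition face (w : pt) (Q : pset) : pset := fun x =>
  Q x /\ forall y, Q y -> dot w y <= dot w x.

Definition msum (A B : pset) : pset := fun x =>
  exists a b, A a /\ B b /\ x = a + b.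
Definition bigmsum (l : seq pset) : pset := foldr msum (fun x => x = 0) l.

Definition slice (u : 'rV[int]_n) (Q : pset) (i : int) : pset := fun x =>
  Q x /\ dot (vecR u) x = i%:~R + 1 / 2%:R.

Definition irange (a b : int) : seq int :=
  if (a < b)%R then [seq a + (k%:Z) | k <- iota 0 `|b - a|%N] else [::].

(* sum_{i=a}^{b-1} (psi^{-1}(i+1/2) ∩ Q); with a = psi_Q, b = psi^Q this is
   the fiber polytope Sigma_psi(Q) of a lattice polytope Q *)
Definition fiber_sum (u : 'rV[int]_n) (Q : pset) (a b : int) : pset :=
  bigmsum [seq slice u Q i | i <- irange a b].

(* [Q]_i = argmax_{x in Q ∩ psi^{-1}(i+1/2)} w^T x  (as a set) *)
Definition bracket (u : 'rV[int]_n) (w : pt) (Q : pset) (i : int) : pset :=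
  face w (slice u Q i).

Definition is_min_psi (u : 'rV[int]_n) (Q : pset) (a : int) : Prop :=
  (exists x, Q x /\ dot (vecR u) x = a%:~R) /\
  forall x, Q x -> a%:~R <= dot (vecR u) x.
Definition is_max_psi (u : 'rV[int]_n) (Q : pset) (a : int) : Prop :=
  (exists x, Q x /\ dot (vecR u) x = a%:~R) /\
  forall x, Q x -> dot (vecR u) x <= a%:~R.

End Defs.

(* Main.v *)
Require Import Defs.
From HB Require Import structures.
From mathcomp Require Import all_boot all_order all_algebra.
From mathcomp Require Import zify ring lra.
Import Order.TTheory GRing.Theory Num.Theory.
Local Open Scope ring_scope.

Set Implicit Arguments. Unset Strict Implicit.
Section H.
Variables (R : realFieldType) (n : nat).
Local Notation pt := 'rV[R]_n.
Implicit Types (A B C : pset R n).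

Lemma dotD (z a b : pt) : dot z (a + b) = dot z a + dot z b.
Proof. rewrite /dot -big_split; apply eq_bigr => i _; by rewrite mxE mulrDr. Qed.

Lemma dotZ_ (z a : pt) c : dot z (c *: a) = c * dot z a.
Proof. rewrite /dot mulr_sumr; apply eq_bigr => i _; by rewrite mxE mulrCA. Qed.

Lemma dot_sum (z : pt) m (f : 'I_m -> pt) : dot z (\sum_i f i) = \sum_i dot z (f i).
Proof.
rewrite /dot; under eq_bigr do rewrite summxE mulr_sumr.
by rewrite exchange_big.
Qed.

Lemma dot_vecR (a b : 'rV[int]_n) : dot (vecR R a) (vecR R b) = (dotZ a b)%:~R.
Proof. rewrite /dot /dotZ rmorph_sum; apply eq_bigr => i _; by rewrite !mxE rmorphM. Qed.

Lemma seq_refl A : set_eq A A. Proof. by []. Qed.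
Lemma seq_sym A B : set_eq A B -> set_eq B A. Proof. by move=> h x; split => /h. Qed.
Lemma seq_trans A B C : set_eq A B -> set_eq B C -> set_eq A C.
Proof. by move=> h1 h2 x; split => [/h1/h2|/h2/h1]. Qed.

Lemma msum_congr A A' B B' : set_eq A A' -> set_eq B B' -> set_eq (msum A B) (msum A' B').
Proof.
move=> ha hb x; split=> -[a [b [Ha [Hb ->]]]]; exists a, b.
- by split; [apply/ha|split; [apply/hb|]].
- by split; [apply/ha|split; [apply/hb|]].
Qed.

Lemma msum_comm A B : set_eq (msum A B) (msum B A).
Proof. by move=> x; split=> -[a [b [Ha [Hb ->]]]]; exists b, a; rewrite addrC. Qed.

Lemma msum_assoc A B C : set_eq (msum A (msum B C)) (msum (msum A B) C).
Proof.
move=> x; split.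
- move=> [a [y [Ha [[b [c [Hb [Hc ->]]]] ->]]]].
  exists (a + b), c; split; [by exists a, b|split=> //]; by rewrite addrA.
- move=> [y [c [[a [b [Ha [Hb ->]]]] [Hc ->]]]].
  exists a, (b + c); split=> //; split; [by exists b, c|]; by rewrite addrA.
Qed.

Lemma msum0l A : set_eq (msum (fun x => x = 0) A) A.
Proof.
move=> x; split.
- by move=> [a [b [-> [Hb ->]]]]; rewrite add0r.
- by move=> Hx; exists 0, x; rewrite add0r.
Qed.

Lemma msum0r A : set_eq (msum A (fun x => x = 0)) A.
Proof. exact: seq_trans (msum_comm _ _) (msum0l _). Qed.

Lemma bigmsum_cat (l1 l2 : seq (pset R n)) :
  set_eq (bigmsum (l1 ++ l2)) (msum (bigmsum l1) (bigmsum l2)).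
Proof.
elim: l1 => [|A l1 IH] /=; first exact: seq_sym (msum0l _).
apply: seq_trans (msum_assoc _ _ _).
exact: msum_congr.
Qed.

Lemma bigmsum_congr (T : eqType) (s : seq T) (f g : T -> pset R n) :
  (forall i, i \in s -> set_eq (f i) (g i)) ->
  set_eq (bigmsum (map f s)) (bigmsum (map g s)).
Proof.
elim: s => [|a s IH] h //=.
apply: msum_congr; first by apply: h; rewrite inE eqxx.
by apply: IH => i hi; apply: h; rewrite inE hi orbT.
Qed.

Lemma face_msum (w : pt) A B : set_eq (face w (msum A B)) (msum (face w A) (face w B)).
Proof.
move=> x; split.
- move=> [[a [b [Ha [Hb ->]]]] Hm].
  exists a, b; split; last split=> //.
  + split=> // a' Ha'.
    have := Hm (a' + b) ltac:(by exists a', b).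
    by rewrite !dotD lerD2r.
  + split=> // b' Hb'.
    have := Hm (a + b') ltac:(by exists a, b').
    by rewrite !dotD lerD2l.
- move=> [a [b [[Ha Hma] [[Hb Hmb] ->]]]].
  split; first by exists a, b.
  move=> y [a' [b' [Ha' [Hb' ->]]]].
  by rewrite !dotD lerD // ?Hma ?Hmb.
Qed.

Lemma face_bigmsum (w : pt) (l : seq (pset R n)) :
  set_eq (face w (bigmsum l)) (bigmsum (map (face w) l)).
Proof.
elim: l => [|A l IH] /=.
- move=> x; split; first by case.
  by move=> ->; split=> // y ->.
- apply: seq_trans (face_msum _ _ _) _.
  exact: msum_congr.
Qed.


Lemma conv_seq_convex (s : seq pt) x y (t : R) : conv_seq s x -> conv_seq s y ->
  0 <= t <= 1 -> conv_seq s (t *: x + (1 - t) *: y).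
Proof.
move=> [c [c0 [c1 ->]]] [d [d0 [d1 ->]]] /andP[t0 t1].
exists (fun i => t * c i + (1 - t) * d i); split.
  by move=> i; rewrite addr_ge0 // mulr_ge0 // subr_ge0.
split.
  by rewrite big_split /= -!mulr_sumr c1 d1 !mulr1 addrC subrK.
rewrite !scaler_sumr -big_split /=; apply eq_bigr => i _.
by rewrite !scalerA scalerDl.
Qed.

Lemma conv_bounds (z : pt) (A : pset R n) lo hi x :
  (forall y, A y -> lo <= dot z y <= hi) -> conv A x -> lo <= dot z x <= hi.
Proof.
move=> hA [s [hs [c [c0 [c1 ->]]]]].
rewrite dot_sum.
have hi' : forall i : 'I_(size s), lo <= dot z s`_i <= hi.
  by move=> i; apply: hA; apply: hs; apply: mem_nth.
apply/andP; split.
- rewrite -[lo]mul1r -c1 mulr_suml; apply: ler_sum => i _.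
  rewrite dotZ_ ler_wpM2l //; by case/andP: (hi' i).
- rewrite -[hi]mul1r -c1 mulr_suml; apply: ler_sum => i _.
  rewrite dotZ_ ler_wpM2l //; by case/andP: (hi' i).
Qed.

Lemma slice_face (u : 'rV[int]_n) (w : pt) (P F : pset R n) (i : int) :
  set_eq (face w P) F -> (exists y, slice u F i y) ->
  set_eq (face w (slice u P i)) (slice u F i).
Proof.
move=> hPF [y [Fy psy]] x; split.
- move=> [[Px psx] Hm]; split=> //.
  have [[Py Hy] _] : face w P y /\ True by split=> //; apply/hPF.
  apply/hPF; split=> // z Pz.
  apply: le_trans (Hy _ Pz) _.
  by apply: Hm; split=> //; apply/hPF.
- move=> [Fx psx].
  have [Px Hx] := (proj2 (hPF x) Fx).
  split; first by split.
  by move=> z [Pz _]; apply: Hx.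
Qed.

End H.

Lemma irange_le (a b : int) : a <= b ->
  irange a b = [seq a + (k%:Z) | k <- iota 0 `|b - a|%N].
Proof.
rewrite /irange le_eqVlt => /orP[/eqP ->|->] //.
by rewrite ltxx subrr.
Qed.

Lemma irange_cat (a b c : int) : a <= b -> b <= c ->
  irange a c = irange a b ++ irange b c.
Proof.
move=> ab bc; rewrite !irange_le ?(le_trans ab bc) //.
have -> : `|c - a|%N = (`|b - a| + `|c - b|)%N.
  apply/eqP; rewrite -eqz_nat PoszD !gez0_abs ?subr_ge0 ?(le_trans ab bc) //.
  by apply/eqP; ring.
rewrite iotaD map_cat add0n; congr (_ ++ _).
rewrite -[X in iota X]addn0 iotaDl -map_comp; apply eq_map => k /=.
rewrite PoszD gez0_abs ?subr_ge0 //; ring.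
Qed.

Lemma mem_irange (a b i : int) : i \in irange a b -> a <= i < b.
Proof.
rewrite /irange; case: ltP => // ab /mapP[k]; rewrite mem_iota add0n => /andP[_ hk] ->.
apply/andP; split; first by rewrite lerDl.
have : (k%:Z < `|b - a|%N) by rewrite ltz_nat.
by rewrite gtz0_abs ?subr_gt0 // ltrBrDl.
Qed.


Theorem theorem4p8 (R : realFieldType) (n : nat)
    (u : 'rV[int]_n) (SF : seq 'rV[int]_n) (v : 'rV[int]_n) (w : 'rV[R]_n)
    (mF MF mP MP : int) :
  (0 < n)%N ->
  let F := conv_seq (map (@vecR R n) SF) in
  let P := conv (fun x => F x \/ x = vecR R v) in
  affdim F n.-1 ->
  ~ aff F (vecR R v) ->
  w != 0 ->
  set_eq (face w P) F ->
  (forall (i : int) (x y : 'rV[R]_n),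
      bracket u w P i x -> bracket u w P i y -> x = y) ->
  is_min_psi u F mF -> is_max_psi u F MF ->
  is_min_psi u P mP -> is_max_psi u P MP ->
  [/\ (exists x, F x /\ dot (vecR R u) x = dot (vecR R u) (vecR R v)) ->
        set_eq (face w (fiber_sum u P mP MP)) (fiber_sum u F mF MF),
      (MF < dotZ u v) ->
        set_eq (face w (fiber_sum u P mP MP))
          (msum (fiber_sum u F mF MF)
                (bigmsum [seq bracket u w P i | i <- irange MF (dotZ u v)]))
    & (dotZ u v < mF) ->
        set_eq (face w (fiber_sum u P mP MP))
          (msum (fiber_sum u F mF MF)
                (bigmsum [seq bracket u w P i | i <- irange (dotZ u v) mF]))].
Proof.
move=> _ F P _ _ _ hPF _ [[xm [Fxm pxm]] hmF] [[xM [FxM pxM]] hMF]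
  [[ym [Pym pym]] hmP] [[yM [PyM pyM]] hMP].
have pv : (dot (vecR R u)) (vecR R v) = (dotZ u v)%:~R by exact: dot_vecR.
have FP : forall x, F x -> P x by move=> x Fx; case: (proj2 (hPF x) Fx).
have Pv : P (vecR R v).
  exists [:: vecR R v]; split; first by move=> y; rewrite inE => /eqP ->; right.
  exists (fun _ => 1); split=> //; split; first by rewrite big_ord1.
  by rewrite big_ord1 scale1r.
have mFM : mF <= MF by rewrite -(ler_int R) -pxM; apply: hmF.
have Pb : forall lo hi, (forall y, F y -> lo <= (dot (vecR R u)) y <= hi) ->
    lo <= (dot (vecR R u)) (vecR R v) <= hi -> forall x, P x -> lo <= (dot (vecR R u)) x <= hi.
  move=> lo hi hF hv x Px; apply: conv_bounds Px => y [/hF //|->//].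
have Fb : forall y, F y -> mF%:~R <= (dot (vecR R u)) y <= MF%:~R.
  by move=> y Fy; rewrite hmF ?hMF.
have slF : forall i, i \in irange mF MF -> exists y, slice u F i y.
  move=> i /mem_irange /andP[i1 i2].
  have lt : (mF%:~R : R) < MF%:~R by rewrite ltr_int (le_lt_trans i1 i2).
  have i1' : (mF%:~R : R) <= i%:~R by rewrite ler_int.
  have i2' : ((i + 1)%:~R : R) <= MF%:~R by rewrite ler_int lezD1.
  rewrite intrD in i2'.
  set t := (i%:~R + 1 / 2%:R - mF%:~R) / (MF%:~R - mF%:~R) : R.
  have d0 : (0 : R) < MF%:~R - mF%:~R by rewrite subr_gt0.
  have t0 : 0 <= t by rewrite divr_ge0 //; lra.
  have t1 : t <= 1 by rewrite ler_pdivrMr // mul1r; lra.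
  exists (t *: xM + (1 - t) *: xm); split.
    by apply: conv_seq_convex => //; rewrite t0 t1.
  rewrite dotD !dotZ_ pxM pxm /t; field.
  by rewrite lt0r_neq0.
have A : forall l, set_eq (face w (bigmsum (map (slice u P) l)))
                          (bigmsum (map (bracket u w P) l)).
  by move=> l; apply: seq_trans (face_bigmsum _ _) _; rewrite -map_comp.
have B : forall l, (forall i, i \in l -> exists y, slice u F i y) ->
    set_eq (bigmsum (map (bracket u w P) l)) (bigmsum (map (slice u F) l)).
  by move=> l hl; apply: bigmsum_congr => i /hl; apply: slice_face.
split.
- move=> [x [Fx hx]].
  have /andP[h1 h2] := Fb x Fx.
  rewrite hx pv ler_int in h1; rewrite hx pv ler_int in h2.
  have hb := Pb _ _ Fb ltac:(by rewrite pv !ler_int h1 h2).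
  have -> : mP = mF.
    apply/le_anti/andP; split; rewrite -(ler_int R).
      by rewrite -pxm; apply: hmP; apply: FP.
    by rewrite -pym; case/andP: (hb _ Pym).
  have -> : MP = MF.
    apply/le_anti/andP; split; rewrite -(ler_int R).
      by rewrite -pyM; case/andP: (hb _ PyM).
    by rewrite -pxM; apply: hMP; apply: FP.
  exact: seq_trans (A _) (B _ slF).
- move=> hv.
  have hb : forall x, P x -> mF%:~R <= (dot (vecR R u)) x <= (dotZ u v)%:~R.
    apply: Pb; last by rewrite pv lexx ler_int (le_trans mFM) // ltW.
    move=> y /Fb /andP[-> h]; rewrite (le_trans h) // ler_int ltW //.
  have -> : mP = mF.
    apply/le_anti/andP; split; rewrite -(ler_int R).
      by rewrite -pxm; apply: hmP; apply: FP.
    by rewrite -pym; case/andP: (hb _ Pym).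
  have -> : MP = dotZ u v.
    apply/le_anti/andP; split; rewrite -(ler_int R).
      by rewrite -pyM; case/andP: (hb _ PyM).
    by rewrite -pv; apply: hMP.
  rewrite /fiber_sum (irange_cat mFM (ltW hv)).
  apply: seq_trans (A _) _; rewrite map_cat.
  apply: seq_trans (bigmsum_cat _ _) _.
  by apply: msum_congr; [apply: B|].
- move=> hv.
  have hb : forall x, P x -> (dotZ u v)%:~R <= (dot (vecR R u)) x <= MF%:~R.
    apply: Pb; last by rewrite pv lexx ler_int /= (le_trans (ltW hv) mFM).
    move=> y /Fb /andP[h ->]; rewrite andbT (le_trans _ h) // ler_int (ltW hv) //.
  have -> : mP = dotZ u v.
    apply/le_anti/andP; split; rewrite -(ler_int R).
      by rewrite -pv; apply: hmP.
    by rewrite -pym; case/andP: (hb _ Pym).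
  have -> : MP = MF.
    apply/le_anti/andP; split; rewrite -(ler_int R).
      by rewrite -pyM; case/andP: (hb _ PyM).
    by rewrite -pxM; apply: hMP; apply: FP.
  rewrite /fiber_sum (irange_cat (ltW hv) mFM).
  apply: seq_trans (A _) _; rewrite map_cat.
  apply: seq_trans (bigmsum_cat _ _) _.
  apply: seq_trans (msum_comm _ _).
  apply: msum_congr; [exact: seq_refl|exact: (B _ slF)].
Qed.
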